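(* For any $a\in(0,1)$ and any $x\in(\frac12,1]$, there exists $\boldsymbol{\mu}=(\mu_1,\mu_2)\in\Lambda$ such that (i) $\mu_1>\mu_2$ and $\mu_1+\mu_2\ge 1$, (ii) $\lambda(x,\boldsymbol{\mu})=a$, and (iii) $x^\star(\boldsymbol{\mu})<\left(\frac12+x\right)/2$.
   Context: Two-armed bandit with Bernoulli rewards; an instance is $\boldsymbol{\mu}=(\mu_1,\mu_2)$, the means of the two arms, and $\Lambda=\{\boldsymbol{\mu}\in(0,1)^2:\mu_1\neq\mu_2\}$. For $p,q\in(0,1)$ let $d(p,q)=p\log\frac{p}{q}+(1-p)\log\frac{1-p}{1-q}$ be the Bernoulli Kullback–Leibler divergence. For $x\in[0,1]$ define $g(x,\boldsymbol{\mu})=\inf_{\lambda\in(0,1)}\big[(1-x)d(\lambda,\mu_1)+x\,d(\lambda,\mu_2)\big]$; equivalently $g(x,\boldsymbol{\mu})=-\log\big((1-\mu_1)^{1-x}(1-\mu_2)^x+\mu_1^{1-x}\mu_2^x\big)$. Let $\lambda(x,\boldsymbol{\mu})$ be the minimizer $\lambda$ in this infimum, and $x^\star(\boldsymbol{\mu})=\arg\max_{x\in(0,1)}g(x,\boldsymbol{\mu})$. *)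

(* Defs.v *)
From Stdlib Require Import Reals ClassicalEpsilon.
From Coquelicot Require Import Coquelicot.
Open Scope R_scope.

Definition kl (p q : R) : R :=
  p * ln (p / q) + (1 - p) * ln ((1 - p) / (1 - q)).

Definition gobj (x mu1 mu2 l : R) : R :=
  (1 - x) * kl l mu1 + x * kl l mu2.

Definition g (x mu1 mu2 : R) : R :=
  real (Glb_Rbar (fun y => exists l, 0 < l < 1 /\ y = gobj x mu1 mu2 l)).

Definition is_lam_min (x mu1 mu2 l : R) : Prop :=
  0 < l < 1 /\ forall l', 0 < l' < 1 -> gobj x mu1 mu2 l <= gobj x mu1 mu2 l'.

Definition lam (x mu1 mu2 : R) : R :=
  epsilon (inhabits 0) (is_lam_min x mu1 mu2).

Definition is_xstar (mu1 mu2 x : R) : Prop :=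
  0 < x < 1 /\ forall y, 0 < y < 1 -> g y mu1 mu2 <= g x mu1 mu2.

Definition xstar (mu1 mu2 : R) : R :=
  epsilon (inhabits 0) (is_xstar mu1 mu2).

Definition inLambda (mu1 mu2 : R) : Prop :=
  0 < mu1 < 1 /\ 0 < mu2 < 1 /\ mu1 <> mu2.

(* Main.v *)
Require Import Defs.
From Stdlib Require Import Reals Lra Psatz ClassicalEpsilon.
From Coquelicot Require Import Coquelicot.
Open Scope R_scope.

Lemma ln_le_sub1 : forall z, 0 < z -> ln z <= z - 1.
Proof. intros z Hz. pose proof (exp_ineq1_le (ln z)). rewrite exp_ln in H; lra. Qed.

Lemma ln_lt_sub1 : forall z, 0 < z -> z <> 1 -> ln z < z - 1.
Proof. intros z Hz H1. assert (ln z <> 0).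
  { intro E. apply H1. rewrite <- (exp_ln z Hz), E. apply exp_0. }
  pose proof (exp_ineq1 (ln z) H). rewrite exp_ln in H0; lra. Qed.

Lemma kl_expand : forall l p, 0 < l < 1 -> 0 < p < 1 ->
  kl l p = l * (ln l - ln p) + (1 - l) * (ln (1 - l) - ln (1 - p)).
Proof. intros l p Hl Hp. unfold kl. rewrite !ln_div by lra. ring. Qed.

Lemma kl_nonneg : forall l p, 0 < l < 1 -> 0 < p < 1 -> 0 <= kl l p.
Proof. intros l p Hl Hp. rewrite kl_expand by lra.
  pose proof (ln_le_sub1 (p / l)). rewrite ln_div in H by lra.
  pose proof (ln_le_sub1 ((1-p) / (1-l))). rewrite ln_div in H0 by lra.
  assert (l * (ln p - ln l) <= l * (p / l - 1)) by (apply Rmult_le_compat_l; lra || (apply H; apply Rdiv_lt_0_compat; lra)).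
  assert ((1-l) * (ln (1-p) - ln (1-l)) <= (1-l) * ((1-p) / (1-l) - 1)).
  { apply Rmult_le_compat_l. lra. apply H0; apply Rdiv_lt_0_compat; lra. }
  replace (l * (p / l - 1)) with (p - l) in H1 by (field; lra).
  replace ((1-l) * ((1-p) / (1-l) - 1)) with (l - p) in H2 by (field; lra).
  lra. Qed.

Lemma kl_zero : forall l p, 0 < l < 1 -> 0 < p < 1 -> kl l p <= 0 -> l = p.
Proof. intros l p Hl Hp Hk. destruct (Req_dec l p) as [|Hne]; auto. exfalso.
  rewrite kl_expand in Hk by lra.
  assert (p / l <> 1). { intro E. apply Hne. assert (p = p / l * l) by (field; lra). rewrite E in H; lra. }
  pose proof (ln_lt_sub1 (p / l) ltac:(apply Rdiv_lt_0_compat; lra) H). rewrite ln_div in H0 by lra.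
  pose proof (ln_le_sub1 ((1-p) / (1-l)) ltac:(apply Rdiv_lt_0_compat; lra)). rewrite ln_div in H1 by lra.
  assert (l * (ln p - ln l) < l * (p / l - 1)) by (apply Rmult_lt_compat_l; lra).
  assert ((1-l) * (ln (1-p) - ln (1-l)) <= (1-l) * ((1-p) / (1-l) - 1)) by (apply Rmult_le_compat_l; lra).
  replace (l * (p / l - 1)) with (p - l) in H2 by (field; lra).
  replace ((1-l) * ((1-p) / (1-l) - 1)) with (l - p) in H3 by (field; lra).
  lra. Qed.

Lemma kl_self : forall p, 0 < p < 1 -> kl p p = 0.
Proof. intros p Hp. rewrite kl_expand by lra. ring. Qed.

Definition PP y m1 m2 := exp ((1 - y) * ln m1 + y * ln m2).
Definition QQ y m1 m2 := exp ((1 - y) * ln (1 - m1) + y * ln (1 - m2)).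
Definition SS y m1 m2 := PP y m1 m2 + QQ y m1 m2.

Lemma gobj_eq : forall y m1 m2 l, 0 < m1 < 1 -> 0 < m2 < 1 -> 0 < l < 1 ->
  gobj y m1 m2 l = kl l (PP y m1 m2 / SS y m1 m2) - ln (SS y m1 m2).
Proof. intros y m1 m2 l H1 H2 Hl.
  assert (HP : 0 < PP y m1 m2) by apply exp_pos.
  assert (HQ : 0 < QQ y m1 m2) by apply exp_pos.
  unfold SS in *. unfold gobj, kl.
  replace (1 - PP y m1 m2 / (PP y m1 m2 + QQ y m1 m2)) with (QQ y m1 m2 / (PP y m1 m2 + QQ y m1 m2)) by (field; lra).
  rewrite !ln_div by (try apply Rdiv_lt_0_compat; lra).
  set (S := PP y m1 m2 + QQ y m1 m2). unfold PP, QQ. rewrite !ln_exp. ring. Qed.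
Lemma PS_bounds : forall y m1 m2, 0 < PP y m1 m2 / SS y m1 m2 < 1.
Proof. intros. assert (0 < PP y m1 m2) by apply exp_pos. assert (0 < QQ y m1 m2) by apply exp_pos.
  unfold SS. split. apply Rdiv_lt_0_compat; lra.
  apply (Rmult_lt_reg_r (PP y m1 m2 + QQ y m1 m2)). lra. field_simplify; lra. Qed.

Lemma lam_eq : forall y m1 m2, 0 < m1 < 1 -> 0 < m2 < 1 ->
  lam y m1 m2 = PP y m1 m2 / SS y m1 m2.
Proof. intros y m1 m2 H1 H2. pose proof (PS_bounds y m1 m2) as HB.
  assert (Hm : is_lam_min y m1 m2 (PP y m1 m2 / SS y m1 m2)).
  { split. exact HB. intros l' Hl'. rewrite !gobj_eq by auto. rewrite kl_self by auto.
    pose proof (kl_nonneg l' (PP y m1 m2 / SS y m1 m2) Hl' HB). lra. }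
  unfold lam. pose proof (epsilon_spec (inhabits 0) (is_lam_min y m1 m2) (ex_intro _ _ Hm)) as He.
  set (e := epsilon _ _) in *. destruct He as [He1 He2].
  specialize (He2 _ HB). rewrite !gobj_eq in He2 by auto. rewrite kl_self in He2 by auto.
  apply kl_zero; auto. lra. Qed.

Lemma g_eq : forall y m1 m2, 0 < m1 < 1 -> 0 < m2 < 1 ->
  g y m1 m2 = - ln (SS y m1 m2).
Proof. intros y m1 m2 H1 H2. pose proof (PS_bounds y m1 m2) as HB. unfold g.
  rewrite (is_glb_Rbar_unique _ (Finite (- ln (SS y m1 m2)))). reflexivity.
  split.
  - intros v [l [Hl ->]]. simpl. rewrite gobj_eq by auto.
    pose proof (kl_nonneg l _ Hl HB). lra.
  - intros b Hb. apply Hb. exists (PP y m1 m2 / SS y m1 m2). split. exact HB.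
    rewrite gobj_eq by auto. rewrite kl_self by auto. ring. Qed.
Lemma SS_form : forall y m1 m2, 0 < m1 < 1 -> 0 < m2 < 1 ->
  SS y m1 m2 = (1 - m1) * exp ((ln (1 - m2) - ln (1 - m1)) * y) + m1 * exp (- ((ln m1 - ln m2) * y)).
Proof. intros y m1 m2 H1 H2. unfold SS, PP, QQ.
  replace ((1 - y) * ln m1 + y * ln m2) with (ln m1 + - ((ln m1 - ln m2) * y)) by ring.
  replace ((1 - y) * ln (1 - m1) + y * ln (1 - m2)) with (ln (1 - m1) + (ln (1 - m2) - ln (1 - m1)) * y) by ring.
  rewrite !exp_plus, !exp_ln by lra. ring. Qed.

Lemma tangent : forall A B s t y0 y, 0 < A -> 0 < B -> 0 < s -> 0 < t ->
  A * s * exp (s * y0) = B * t * exp (- (t * y0)) -> y <> y0 ->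
  A * exp (s * y0) + B * exp (- (t * y0)) < A * exp (s * y) + B * exp (- (t * y)).
Proof. intros A B s t y0 y HA HB Hs Ht HF Hne.
  assert (E1 : exp (s * y) = exp (s * y0) * exp (s * (y - y0))) by (rewrite <- exp_plus; f_equal; ring).
  assert (E2 : exp (- (t * y)) = exp (- (t * y0)) * exp (- (t * (y - y0)))) by (rewrite <- exp_plus; f_equal; ring).
  assert (I1 : 1 + s * (y - y0) < exp (s * (y - y0))).
  { apply exp_ineq1. intro Z. apply Rmult_integral in Z. destruct Z; lra. }
  assert (I2 : 1 + - (t * (y - y0)) < exp (- (t * (y - y0)))).
  { apply exp_ineq1. intro Z. assert (t * (y - y0) = 0) by lra. apply Rmult_integral in H. destruct H; lra. }
  pose proof (exp_pos (s * y0)). pose proof (exp_pos (- (t * y0))).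
  rewrite E1, E2.
  assert (A * exp (s * y0) * (1 + s * (y - y0)) < A * exp (s * y0) * exp (s * (y - y0))) by (apply Rmult_lt_compat_l; nra).
  assert (B * exp (- (t * y0)) * (1 + - (t * (y - y0))) < B * exp (- (t * y0)) * exp (- (t * (y - y0)))) by (apply Rmult_lt_compat_l; nra).
  nra. Qed.

Lemma xstar_eq : forall m1 m2 y0, 0 < m1 < 1 -> 0 < m2 < 1 -> m2 < m1 -> 0 < y0 < 1 ->
  (1 - m1) * (ln (1 - m2) - ln (1 - m1)) * exp ((ln (1 - m2) - ln (1 - m1)) * y0)
   = m1 * (ln m1 - ln m2) * exp (- ((ln m1 - ln m2) * y0)) ->
  xstar m1 m2 = y0.
Proof. intros m1 m2 y0 H1 H2 H12 Hy HF.
  assert (Hs : 0 < ln (1 - m2) - ln (1 - m1)) by (pose proof (ln_increasing (1 - m1) (1 - m2)); lra).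
  assert (Ht : 0 < ln m1 - ln m2) by (pose proof (ln_increasing m2 m1); lra).
  assert (Hstrict : forall y, y <> y0 -> SS y0 m1 m2 < SS y m1 m2).
  { intros y Hne. rewrite !SS_form by auto. apply tangent; auto; lra. }
  assert (Hpos : forall y, 0 < SS y m1 m2) by (intros; unfold SS, PP, QQ; pose proof (exp_pos ((1 - y) * ln m1 + y * ln m2)); pose proof (exp_pos ((1 - y) * ln (1 - m1) + y * ln (1 - m2))); lra).
  assert (Hx : is_xstar m1 m2 y0).
  { split. exact Hy. intros y Hy'. rewrite !g_eq by auto.
    destruct (Req_dec y y0) as [->|Hne]. lra.
    pose proof (ln_increasing _ _ (Hpos y0) (Hstrict y Hne)). lra. }
  unfold xstar. pose proof (epsilon_spec (inhabits 0) (is_xstar m1 m2) (ex_intro _ _ Hx)) as He.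
  set (e := epsilon _ _) in *. destruct He as [He1 He2].
  specialize (He2 _ Hy). rewrite !g_eq in He2 by auto.
  destruct (Req_dec e y0) as [|Hne]; auto. exfalso.
  pose proof (ln_increasing _ _ (Hpos y0) (Hstrict e Hne)). lra. Qed.
Lemma PP_form : forall y m1 m2, 0 < m1 < 1 -> 0 < m2 < 1 ->
  PP y m1 m2 = m1 * exp (- ((ln m1 - ln m2) * y)).
Proof. intros y m1 m2 H1 H2. unfold PP.
  replace ((1 - y) * ln m1 + y * ln m2) with (ln m1 + - ((ln m1 - ln m2) * y)) by ring.
  rewrite exp_plus, exp_ln by lra. ring. Qed.

Lemma QQ_form : forall y m1 m2, 0 < m1 < 1 -> 0 < m2 < 1 ->
  QQ y m1 m2 = (1 - m1) * exp ((ln (1 - m2) - ln (1 - m1)) * y).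
Proof. intros y m1 m2 H1 H2. unfold QQ.
  replace ((1 - y) * ln (1 - m1) + y * ln (1 - m2)) with (ln (1 - m1) + (ln (1 - m2) - ln (1 - m1)) * y) by ring.
  rewrite exp_plus, exp_ln by lra. ring. Qed.

Lemma construct : forall a x s t, 0 < a < 1 -> 1/2 < x <= 1 -> 0 < t <= s ->
  (1 - a) * (exp s - 1) * exp (- (t * x)) = a * (1 - exp (- t)) * exp (s * x) ->
  (exp s - 1) * t * exp (- (t * ((1/2 + x) / 2))) < (1 - exp (- t)) * s * exp (s * ((1/2 + x) / 2)) ->
  exists mu1 mu2 : R,
    inLambda mu1 mu2 /\
    (mu1 > mu2 /\ mu1 + mu2 >= 1) /\
    lam x mu1 mu2 = a /\
    xstar mu1 mu2 < (1/2 + x) / 2.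
Proof. intros a x s t Ha Hx Hts Hlam Hc.
  set (c := (1/2 + x) / 2) in *.
  set (E := exp s) in *. set (F := exp (- t)) in *.
  assert (HE : 1 < E) by (unfold E; rewrite <- exp_0; apply exp_increasing; lra).
  assert (HF1 : F < 1) by (unfold F; rewrite <- exp_0; apply exp_increasing; lra).
  assert (HF0 : 0 < F) by apply exp_pos.
  assert (HFt : F * exp t = 1) by (unfold F; rewrite <- exp_plus, <- exp_0; f_equal; ring).
  assert (HEF : 1 <= E * F).
  { unfold E, F. rewrite <- exp_plus. destruct (Req_dec s t) as [->|Hne].
    - replace (t + - t) with 0 by ring. rewrite exp_0; lra.
    - left. rewrite <- exp_0. apply exp_increasing. lra. }
  set (m1 := (E - 1) / (E - F)).
  set (m2 := m1 * F).
  assert (Hm1 : 0 < m1 < 1).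
  { unfold m1. split. apply Rdiv_lt_0_compat; lra.
    apply (Rmult_lt_reg_r (E - F)). lra. field_simplify; lra. }
  assert (Hm2 : 0 < m2 < m1) by (unfold m2; split; nra).
  assert (H1m1 : 1 - m1 = (1 - F) / (E - F)) by (unfold m1; field; lra).
  assert (H1m2 : 1 - m2 = (1 - m1) * E) by (unfold m2; rewrite H1m1; unfold m1; field; lra).
  assert (Ht : ln m1 - ln m2 = t).
  { unfold m2. rewrite ln_mult by lra. unfold F. rewrite ln_exp. ring. }
  assert (Hs : ln (1 - m2) - ln (1 - m1) = s).
  { rewrite H1m2. rewrite ln_mult by lra. unfold E. rewrite ln_exp. ring. }
  assert (Hm1' : 0 < m1 < 1) by exact Hm1.
  assert (Hm2' : 0 < m2 < 1) by lra.
  exists m1, m2. split; [|split; [|split]].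
  - unfold inLambda. lra.
  - split. lra. apply Rle_ge. unfold m2, m1.
    apply (Rmult_le_reg_r (E - F)). lra. field_simplify; nra.
  - rewrite lam_eq by auto. unfold SS. rewrite PP_form, QQ_form by auto. rewrite Ht, Hs.
    assert (Hkey : (1 - a) * (m1 * exp (- (t * x))) = a * ((1 - m1) * exp (s * x))).
    { rewrite H1m1. unfold m1. apply (Rmult_eq_reg_r (E - F)). 2: lra.
      field_simplify; try lra. }
    pose proof (exp_pos (- (t * x))). pose proof (exp_pos (s * x)).
    apply (Rmult_eq_reg_r (m1 * exp (- (t * x)) + (1 - m1) * exp (s * x))). 2: nra.
    field_simplify; nra.
  - set (R := m1 * t / ((1 - m1) * s)).
    assert (HR : R = (E - 1) * t / ((1 - F) * s)).
    { unfold R. rewrite H1m1. unfold m1. field. repeat split; lra. }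
    assert (I1 : s < E - 1) by (unfold E; pose proof (exp_ineq1 s); lra).
    assert (I2 : 1 - t < F) by (unfold F; pose proof (exp_ineq1 (- t)); lra).
    assert (I3 : t < exp t - 1) by (pose proof (exp_ineq1 t); lra).
    assert (I4 : E - 1 < s * E).
    { pose proof (exp_ineq1 (- s)). assert (exp (- s) * E = 1) by (unfold E; rewrite <- exp_plus, <- exp_0; f_equal; ring).
      pose proof (exp_pos (- s)). nra. }
    assert (HR0 : 0 < R) by (rewrite HR; apply Rdiv_lt_0_compat; nra).
    assert (R1 : 1 < R).
    { rewrite HR. apply (Rmult_lt_reg_r ((1 - F) * s)). nra. field_simplify; nra. }
    assert (R2 : R < exp (s + t)).
    { assert ((1 - F) * exp t = exp t - 1) by nra.
      pose proof (exp_pos t).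
      rewrite exp_plus. fold E. rewrite HR. apply (Rmult_lt_reg_r ((1 - F) * s)). nra.
      field_simplify; nra. }
    assert (R3 : R < exp (c * (s + t))).
    { replace (c * (s + t)) with (s * c + t * c) by ring. rewrite exp_plus. rewrite HR.
      assert (exp (- (t * c)) * exp (t * c) = 1) by (rewrite <- exp_plus, <- exp_0; f_equal; ring).
      pose proof (exp_pos (t * c)). pose proof (exp_pos (s * c)). pose proof (exp_pos (- (t * c))).
      apply (Rmult_lt_reg_r ((1 - F) * s)). nra.
      replace ((E - 1) * t / ((1 - F) * s) * ((1 - F) * s)) with ((E - 1) * t) by (field; nra).
      pose proof (Rmult_lt_compat_r (exp (t * c)) _ _ H0 Hc).
      replace ((E - 1) * t * exp (- (t * c)) * exp (t * c)) with ((E - 1) * t * (exp (- (t * c)) * exp (t * c))) in H3 by ring.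
      rewrite H in H3. lra. }
    set (y0 := ln R / (s + t)).
    assert (Hy0 : exp ((s + t) * y0) = R) by (unfold y0; replace ((s + t) * (ln R / (s + t))) with (ln R) by (field; lra); apply exp_ln; lra).
    assert (L1 : 0 < ln R) by (rewrite <- ln_1; apply ln_increasing; lra).
    assert (L2 : ln R < s + t) by (rewrite <- (ln_exp (s + t)); apply ln_increasing; lra).
    assert (L3 : ln R < c * (s + t)) by (rewrite <- (ln_exp (c * (s + t))); apply ln_increasing; lra).
    assert (Y1 : 0 < y0) by (unfold y0; apply Rdiv_lt_0_compat; lra).
    assert (Y2 : y0 < 1) by (unfold y0; apply (Rmult_lt_reg_r (s + t)); [lra|]; field_simplify; lra).
    assert (Y3 : y0 < c) by (unfold y0; apply (Rmult_lt_reg_r (s + t)); [lra|]; field_simplify; lra).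
    rewrite (xstar_eq m1 m2 y0); auto; try lra.
    rewrite Ht, Hs.
    assert (exp (s * y0) = R * exp (- (t * y0))) by (rewrite <- Hy0, <- exp_plus; f_equal; ring).
    rewrite H. unfold R. field. split; lra. Qed.
Lemma pos_from_deriv : forall (f f' : R -> R) S, 0 < S -> f 0 = 0 ->
  (forall v, 0 <= v <= S -> is_derive f v (f' v)) -> (forall v, 0 < v < S -> 0 < f' v) -> 0 < f S.
Proof. intros f f' S HS H0 Hd Hp.
  destruct (MVT_cor2 f f' 0 S HS) as [c [Hc1 Hc2]].
  { intros c Hc. apply is_derive_Reals. apply Hd. exact Hc. }
  specialize (Hp c Hc2). rewrite H0 in Hc1. nra. Qed.

Lemma Gpos : forall c v, 1/2 < c < 1 -> 0 < v -> v < (1 - exp (- v)) * exp (c * v).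
Proof. intros c v Hc Hv.
  assert (Hd1 : forall w, 0 < w -> 0 < c * exp (c * w) - (c - 1) * exp ((c - 1) * w) - 1).
  { intros w Hw.
    apply (pos_from_deriv (fun w => c * exp (c * w) - (c - 1) * exp ((c - 1) * w) - 1)
              (fun w => c * c * exp (c * w) - (c - 1) * (c - 1) * exp ((c - 1) * w)) w Hw).
    - cbv beta. rewrite !Rmult_0_r, exp_0. ring.
    - intros u _. auto_derive; auto. ring.
    - intros u Hu. assert (exp ((c - 1) * u) < exp (c * u)) by (apply exp_increasing; nra).
      pose proof (exp_pos ((c - 1) * u)). nra. }
  assert (E : (1 - exp (- v)) * exp (c * v) = exp (c * v) - exp ((c - 1) * v)).
  { rewrite Rmult_minus_distr_r, Rmult_1_l, <- exp_plus. f_equal. f_equal. ring. }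
  rewrite E.
  assert (0 < (fun w => exp (c * w) - exp ((c - 1) * w) - w) v).
  { apply (pos_from_deriv (fun w => exp (c * w) - exp ((c - 1) * w) - w) (fun w => c * exp (c * w) - (c - 1) * exp ((c - 1) * w) - 1) v Hv).
    - cbv beta. rewrite !Rmult_0_r, exp_0. ring.
    - intros u _. auto_derive; auto. ring.
    - intros u Hu. apply Hd1. lra. }
  simpl in H. lra. Qed.

Lemma Fneg : forall c v, 1/2 < c < 1 -> 0 < v -> exp v <= c / (1 - c) -> (exp v - 1) * exp (- (c * v)) < v.
Proof. intros c v Hc Hv HvS.
  assert (Hd1 : forall w, 0 < w -> exp w <= c / (1 - c) -> 0 < 1 - (1 - c) * exp ((1 - c) * w) + c * exp (- (c * w))  - 2 * c * exp (- (c * w))).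
  { intros w Hw HwS.
    apply (pos_from_deriv (fun w => 1 - (1 - c) * exp ((1 - c) * w) + c * exp (- (c * w)) - 2 * c * exp (- (c * w)))
              (fun w => - ((1 - c) * (1 - c)) * exp ((1 - c) * w) + c * c * exp (- (c * w))) w Hw).
    - cbv beta. rewrite !Rmult_0_r, Ropp_0, exp_0. ring.
    - intros u _. auto_derive; auto. ring.
    - intros u Hu. assert (Eu : exp ((1 - c) * u) = exp u * exp (- (c * u))) by (rewrite <- exp_plus; f_equal; ring).
      rewrite Eu. assert (exp u < exp w) by (apply exp_increasing; lra).
      assert (exp u * (1 - c) < c).
      { apply (Rmult_le_compat_r (1 - c)) in HwS; [|lra].
        replace (c / (1 - c) * (1 - c)) with c in HwS by (field; lra). nra. }
      pose proof (exp_pos (- (c * u))). pose proof (exp_pos u).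
      assert ((1 - c) * (1 - c) * exp u < c * c) by nra.
      assert (0 < (c * c - (1 - c) * (1 - c) * exp u) * exp (- (c * u))) by (apply Rmult_lt_0_compat; lra). nra. }
  assert (E : (exp v - 1) * exp (- (c * v)) = exp ((1 - c) * v) - exp (- (c * v))).
  { rewrite Rmult_minus_distr_r, Rmult_1_l, <- exp_plus. f_equal. f_equal. ring. }
  rewrite E.
  assert (0 < (fun w => w - (exp ((1 - c) * w) - exp (- (c * w)))) v).
  { apply (pos_from_deriv (fun w => w - (exp ((1 - c) * w) - exp (- (c * w)))) (fun w => 1 - (1 - c) * exp ((1 - c) * w) + c * exp (- (c * w)) - 2 * c * exp (- (c * w))) v Hv).
    - cbv beta. rewrite !Rmult_0_r, Ropp_0, exp_0. ring.
    - intros u _. auto_derive; auto. ring.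
    - intros u Hu. apply Hd1. lra. assert (exp u < exp v) by (apply exp_increasing; lra). lra. }
  simpl in H. lra. Qed.
Theorem mainTheorem1 :
  forall a x : R, 0 < a < 1 -> 1/2 < x <= 1 ->
  exists mu1 mu2 : R,
    inLambda mu1 mu2 /\
    (mu1 > mu2 /\ mu1 + mu2 >= 1) /\
    lam x mu1 mu2 = a /\
    xstar mu1 mu2 < (1/2 + x) / 2.
Proof.
  intros a x Ha Hx.
  destruct (Rlt_le_dec a (1/2)) as [Hlt|Hge].
  - set (K := (1 - a) / a).
    assert (HK : 1 < K) by (unfold K; apply (Rmult_lt_reg_r a); [lra|]; field_simplify; lra).
    set (u := ln K / (2 * x - 1)).
    assert (Hu : 0 < u) by (unfold u; apply Rdiv_lt_0_compat; [rewrite <- ln_1; apply ln_increasing|]; lra).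
    assert (HuK : exp (u * (2 * x - 1)) = K) by (unfold u; replace (ln K / (2 * x - 1) * (2 * x - 1)) with (ln K) by (field; lra); apply exp_ln; lra).
    assert (HEF : exp u * exp (- u) = 1) by (rewrite <- exp_plus, <- exp_0; f_equal; ring).
    apply (construct a x u u); try lra.
    + assert (exp u * exp (- (u * x)) * exp (u * (2 * x - 1)) = exp (u * x)) by (rewrite <- !exp_plus; f_equal; ring).
      rewrite HuK in H. unfold K in H.
      replace (exp u - 1) with (exp u * (1 - exp (- u))) by (rewrite Rmult_minus_distr_l, HEF; ring).
      rewrite <- H. field. lra.
    + set (c := (1/2 + x) / 2).
      replace (exp u - 1) with (exp u * (1 - exp (- u))) by (rewrite Rmult_minus_distr_l, HEF; ring).
      assert (exp u * exp (- (u * c)) < exp (u * c)) by (rewrite <- exp_plus; apply exp_increasing; unfold c; nra).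
      assert (0 < 1 - exp (- u)) by (assert (exp (- u) < 1) by (rewrite <- exp_0; apply exp_increasing; lra); lra).
      assert (0 < (1 - exp (- u)) * u) by nra.
      replace (exp u * (1 - exp (- u)) * u * exp (- (u * c))) with ((1 - exp (- u)) * u * (exp u * exp (- (u * c)))) by ring.
      apply Rmult_lt_compat_l; lra.
  - set (c := (1/2 + x) / 2).
    assert (Hc : 1/2 < c < 1) by (unfold c; lra).
    assert (Hc1 : 1 < c / (1 - c)) by (apply (Rmult_lt_reg_r (1 - c)); [lra|]; field_simplify; lra).
    set (s := ln (c / (1 - c))).
    assert (Hs : 0 < s) by (unfold s; rewrite <- ln_1; apply ln_increasing; lra).
    assert (HEs : exp s = c / (1 - c)) by (unfold s; apply exp_ln; lra).
    assert (HE1 : 1 < exp s) by lra.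
    set (G := fun t => a * (1 - exp (- t)) * exp (s * x) - (1 - a) * (exp s - 1) * exp (- (t * x))).
    assert (HG0 : G 0 < 0).
    { unfold G. rewrite Ropp_0, Rmult_0_l, Ropp_0, exp_0. nra. }
    assert (HGs : 0 <= G s).
    { unfold G.
      assert (Hes : exp s * exp (- s) = 1) by (rewrite <- exp_plus, <- exp_0; f_equal; ring).
      assert (exp s * exp (- (s * x)) <= exp (s * x)).
      { rewrite <- exp_plus. apply Rlt_le, exp_increasing. nra. }
      pose proof (exp_pos (- s)). pose proof (exp_pos (- (s * x))). pose proof (exp_pos (s * x)).
      replace (exp s - 1) with (exp s * (1 - exp (- s))) by (rewrite Rmult_minus_distr_l, Hes; ring).
      assert (0 < 1 - exp (- s)) by (assert (exp (- s) < 1) by (rewrite <- exp_0; apply exp_increasing; lra); lra).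
      assert ((1 - a) * (exp s * exp (- (s * x))) <= a * exp (s * x)) by nra.
      nra. }
    assert (Hcont : continuity G).
    { intro v. apply derivable_continuous_pt. eexists. apply is_derive_Reals. unfold G. auto_derive. auto. reflexivity. }
    destruct (IVT_cor G 0 s Hcont ltac:(lra) ltac:(nra)) as [t [Ht HGt]].
    assert (Ht0 : 0 < t).
    { destruct (Req_dec t 0) as [->|]; [lra|lra]. }
    apply (construct a x s t); try lra.
    + unfold G in HGt. lra.
    + fold c.
      pose proof (Fneg c s Hc Hs ltac:(lra)) as F1.
      pose proof (Gpos c t Hc Ht0) as G1.
      pose proof (exp_pos (- (c * s))). pose proof (exp_pos (c * t)).
      pose proof (exp_pos (s * c)). pose proof (exp_pos (- (t * c))).
      assert (E1 : exp (- (c * s)) * exp (s * c) = 1) by (rewrite <- exp_plus, <- exp_0; f_equal; ring).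
      assert (E2 : exp (c * t) * exp (- (t * c)) = 1) by (rewrite <- exp_plus, <- exp_0; f_equal; ring).
      assert (P : (exp s - 1) * exp (- (c * s)) * t < s * ((1 - exp (- t)) * exp (c * t))).
      { apply Rle_lt_trans with (s * t). apply Rmult_le_compat_r; lra. apply Rmult_lt_compat_l; lra. }
      apply (Rmult_lt_compat_r (exp (s * c) * exp (- (t * c)))) in P; [|nra].
      replace ((exp s - 1) * exp (- (c * s)) * t * (exp (s * c) * exp (- (t * c))))
        with ((exp s - 1) * t * exp (- (t * c)) * (exp (- (c * s)) * exp (s * c))) in P by ring.
      replace (s * ((1 - exp (- t)) * exp (c * t)) * (exp (s * c) * exp (- (t * c))))
        with ((1 - exp (- t)) * s * exp (s * c) * (exp (c * t) * exp (- (t * c)))) in P by ring.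
      rewrite E1, E2 in P. lra.
Qed.
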